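(* Let $g_1=(y^2+x)\,dx\,dy$, $g_2=-2\frac{y^2+x}{y^3}dx\,dy+\frac{(y^2+x)^2}{y^4}dy^2$, $g_3=\frac{y^2+x}{(3x-y^2)^6}\big(9(y^2+x)dx^2-4y(9x+y^2)dx\,dy+12x(y^2+x)dy^2\big)$. Let $(u,v)\mapsto(x(u,v),y(u,v))$ be a local diffeomorphism such that for each $i\in\{1,2,3\}$ the pullback of $g_i$ (written in $(x,y)$) equals $\mu_i\,g_i$ written in the coordinates $(u,v)$, for some constants $\mu_i\ne0$. Then there is $k\in\mathbb R\setminus\{0\}$ with $x=k^2u$ and $y=kv$.
   Context: $dx\,dy$ denotes the symmetric product. The metrics $g_1,g_2,g_3$ are projectively equivalent and their Liouville tensors are eigenvectors of the Lie derivative along the projective vector field $w=2x\partial_x+y\partial_y$, with $\mathcal L_wg_1=5g_1$, $\mathcal L_wg_2=2g_2$, $\mathcal L_wg_3=-4g_3$. *)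

(* Defs.v *)
From Stdlib Require Import Reals.
Open Scope R_scope.

(* A symmetric 2-tensor on R^2 at a point, by its components
   (g11, g12, g22) in the coordinate basis:
   g = g11 dx^2 + 2 g12 dx dy + g22 dy^2,
   where dx dy denotes the symmetric product (1/2)(dx(x)dy + dy(x)dx). *)
Definition sym2 : Type := (R * R * R)%type.
Definition metric2 : Type := R -> R -> sym2.

Definition mk (e f g : R) : sym2 := (e, f, g).
Definition c11 (s : sym2) : R := fst (fst s).
Definition c12 (s : sym2) : R := snd (fst s).
Definition c22 (s : sym2) : R := snd s.

Definition g1 : metric2 := fun x y =>
  mk 0 ((y^2 + x) / 2) 0.

Definition g2 : metric2 := fun x y =>
  mk 0 (- (y^2 + x) / y^3) ((y^2 + x)^2 / y^4).

Definition g3 : metric2 := fun x y =>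
  let f := (y^2 + x) / (3*x - y^2)^6 in
  mk (f * (9 * (y^2 + x))) (f * (- 2 * y * (9*x + y^2))) (f * (12 * x * (y^2 + x))).

Definition scale2 (m : R) (s : sym2) : sym2 := mk (m * c11 s) (m * c12 s) (m * c22 s).

(* Pullback of the tensor s (at the image point) by a linear map with
   Jacobian [[a, b], [c, d]] = [[dX/du, dX/dv], [dY/du, dY/dv]]. *)
Definition pull2 (s : sym2) (a b c d : R) : sym2 :=
  mk (c11 s * a * a + 2 * c12 s * a * c + c22 s * c * c)
     (c11 s * a * b + c12 s * (a * d + b * c) + c22 s * c * d)
     (c11 s * b * b + 2 * c12 s * b * d + c22 s * d * d).

Definition partial_u (f : R -> R -> R) (u v l : R) : Prop :=
  derivable_pt_lim (fun s => f s v) u l.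
Definition partial_v (f : R -> R -> R) (u v l : R) : Prop :=
  derivable_pt_lim (fun t => f u t) v l.

Definition open2 (U : R -> R -> Prop) : Prop :=
  forall u v, U u v -> exists r, 0 < r /\
    forall u' v', Rabs (u' - u) < r -> Rabs (v' - v) < r -> U u' v'.

Definition connected2 (U : R -> R -> Prop) : Prop :=
  forall A B : R -> R -> Prop, open2 A -> open2 B ->
    (forall u v, U u v -> A u v \/ B u v) ->
    (forall u v, U u v -> ~ (A u v /\ B u v)) ->
    (exists u v, U u v /\ A u v) ->
    (exists u v, U u v /\ B u v) -> False.

Definition cont2_on (U : R -> R -> Prop) (f : R -> R -> R) : Prop :=
  forall u v, U u v -> forall eps, 0 < eps -> exists delta, 0 < delta /\
    forall u' v', Rabs (u' - u) < delta -> Rabs (v' - v) < delta ->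
      Rabs (f u' v' - f u v) < eps.

Fixpoint Ck_on (k : nat) (U : R -> R -> Prop) (f : R -> R -> R) : Prop :=
  match k with
  | O => cont2_on U f
  | S k' => exists fu fv : R -> R -> R,
      (forall u v, U u v -> partial_u f u v (fu u v) /\ partial_v f u v (fv u v)) /\
      Ck_on k' U fu /\ Ck_on k' U fv
  end.

Definition smooth_on (U : R -> R -> Prop) (f : R -> R -> R) : Prop :=
  forall k, Ck_on k U f.

Definition local_diffeo_on (U : R -> R -> Prop) (X Y : R -> R -> R) : Prop :=
  smooth_on U X /\ smooth_on U Y /\
  forall u v a b c d, U u v ->
    partial_u X u v a -> partial_v X u v b ->
    partial_u Y u v c -> partial_v Y u v d ->
    a * d - b * c <> 0.

Definition pullback_eq (U : R -> R -> Prop) (X Y : R -> R -> R)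
    (g : metric2) (mu : R) : Prop :=
  forall u v a b c d, U u v ->
    partial_u X u v a -> partial_v X u v b ->
    partial_u Y u v c -> partial_v Y u v d ->
    pull2 (g (X u v) (Y u v)) a b c d = scale2 mu (g u v).

(* Main.v *)
Require Import Defs.
From Stdlib Require Import Reals Lra Classical.
Open Scope R_scope.

Ltac clear_den H k := match type of H with ?l = ?r =>
  match goal with |- ?gl = ?gr => transitivity (l*k);
   [field; repeat split; assumption | rewrite H; field; repeat split; assumption] end end.

Lemma c11_mk e f g : c11 (mk e f g) = e. Proof. reflexivity. Qed.
Lemma c12_mk e f g : c12 (mk e f g) = f. Proof. reflexivity. Qed.
Lemma c22_mk e f g : c22 (mk e f g) = g. Proof. reflexivity. Qed.
Lemma mk_inj e f g e' f' g' : mk e f g = mk e' f' g' -> e = e' /\ f = f' /\ g = g'.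
Proof. unfold mk; intro H; injection H; auto. Qed.

Lemma prod_cancel (A B C : R) : A <> 0 -> A * B = A * C -> B = C.
Proof. intros. apply (Rmult_eq_reg_l A); auto. Qed.

Lemma alg (u v X Y a b c d mu1 mu2 mu3 : R) :
  v <> 0 -> 3 * u - v ^ 2 <> 0 -> Y <> 0 -> 3 * X - Y ^ 2 <> 0 ->
  v ^ 2 + u <> 0 -> a * d - b * c <> 0 ->
  mu1 <> 0 -> mu2 <> 0 -> mu3 <> 0 ->
  pull2 (g1 X Y) a b c d = scale2 mu1 (g1 u v) ->
  pull2 (g2 X Y) a b c d = scale2 mu2 (g2 u v) ->
  pull2 (g3 X Y) a b c d = scale2 mu3 (g3 u v) ->
  mu2 * Y ^ 3 = mu1 * v ^ 3 /\ X * v ^ 2 = Y ^ 2 * u.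
Proof.
  intros hv hu hY hX hP hdet h1 h2 h3 E1 E2 E3.
  unfold pull2, scale2, g1, g2, g3 in E1, E2, E3; rewrite ?c11_mk, ?c12_mk, ?c22_mk in E1, E2, E3.
  apply mk_inj in E1; destruct E1 as [E1a [E1b E1c]].
  apply mk_inj in E2; destruct E2 as [E2a [E2b E2c]].
  apply mk_inj in E3; destruct E3 as [E3a [E3b E3c]].
  set (P := v ^ 2 + u) in *. set (Q := Y ^ 2 + X) in *.
  assert (C1 : Q * a * d + Q * b * c = mu1 * P) by lra.
  assert (hQ : Q <> 0).
  { intro HQ. rewrite HQ in C1. apply hP. apply (prod_cancel mu1); auto. lra. }
  assert (Hac : a * c = 0).
  { apply (prod_cancel Q); auto. lra. }
  assert (Hbd : b * d = 0).
  { apply (prod_cancel Q); auto. lra. }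
  destruct (Rmult_integral _ _ Hac) as [Ha0 | Hc0].
  - exfalso. subst a.
    assert (d = 0).
    { destruct (Rmult_integral _ _ Hbd) as [Hb0 | Hd0]; auto. subst b. lra. }
    subst d.
    assert (HH : 0 = mu2 * (P ^ 2 / v ^ 4)).
    { rewrite <- E2c. ring. }
    assert (HH2 : mu2 * P^2 = 0).
    { symmetry in HH. clear_den HH (v^4). }
    apply Rmult_integral in HH2. destruct HH2 as [H|H]; auto.
    apply (pow_nonzero P 2 hP); auto.
  - subst c.
    assert (ha : a <> 0) by (intro; subst; apply hdet; ring).
    assert (hd : d <> 0) by (intro; subst; apply hdet; ring).
    assert (b = 0).
    { destruct (Rmult_integral _ _ Hbd) as [Hb0 | Hd0]; auto. contradiction. }
    subst b.
    assert (C1' : Q * a * d = mu1 * P) by lra.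
    assert (C2 : Q * a * d * v ^ 3 = mu2 * P * Y ^ 3).
    { clear_den E2b (- v ^ 3 * Y ^ 3). }
    assert (C3 : Q ^ 2 * d ^ 2 * v ^ 4 = mu2 * P ^ 2 * Y ^ 4).
    { clear_den E2c (v ^ 4 * Y ^ 4). }
    split.
    + apply (prod_cancel P); auto.
      rewrite C1' in C2.
      transitivity (mu1 * P * v ^ 3). 2: ring.
      rewrite C2. ring.
    + assert (R1 : Q * d * v = a * P * Y).
      { assert (nz : Q * a * d * v ^ 3 <> 0).
        { repeat apply Rmult_integral_contrapositive_currified; auto; apply pow_nonzero; auto. }
        assert (E' : (Q * d * v - a * P * Y) * (Q * a * d * v ^ 3) = 0).
        { transitivity (a * (Q ^ 2 * d ^ 2 * v ^ 4) - a * P * Y * (Q * a * d * v ^ 3)). ring.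
          rewrite C3, C2; ring. }
        apply Rmult_integral in E'. destruct E'; [lra | contradiction]. }
      set (S := (3 * u - v ^ 2) ^ 6) in *. set (T := (3 * X - Y ^ 2) ^ 6) in *.
      assert (hS : S <> 0) by (apply pow_nonzero; auto).
      assert (hT : T <> 0) by (apply pow_nonzero; auto).
      assert (Cb : Q * Y * (9 * X + Y ^ 2) * a * d * S = mu3 * P * v * (9 * u + v ^ 2) * T).
      { clear_den E3b (- / 2 * S * T). }
      assert (Cc : Q ^ 2 * X * d ^ 2 * S = mu3 * P ^ 2 * u * T).
      { clear_den E3c (/ 12 * S * T). }
      assert (G : Y * (9 * X + Y ^ 2) * a * P * u = Q * d * v * X * (9 * u + v ^ 2)).
      { apply (prod_cancel (Q * d * S)).
        { repeat apply Rmult_integral_contrapositive_currified; auto. }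
        transitivity ((Q * Y * (9 * X + Y ^ 2) * a * d * S) * (P * u)). ring.
        rewrite Cb.
        transitivity ((Q ^ 2 * X * d ^ 2 * S) * (v * (9 * u + v ^ 2))). 2: ring.
        rewrite Cc. ring. }
      rewrite R1 in G.
      apply (prod_cancel (a * P * Y)).
      { repeat apply Rmult_integral_contrapositive_currified; auto. }
      lra.
Qed.

Lemma cube_inj (x y : R) : x ^ 3 = y ^ 3 -> x = y.
Proof.
  intro H.
  destruct (Rtotal_order x y) as [Hl | [He | Hg]]; auto; exfalso.
  - assert (x ^ 3 < y ^ 3); [|lra].
    assert (y ^ 3 - x ^ 3 = (y - x) * ((x + y / 2) ^ 2 + 3 / 4 * y ^ 2)) by field.
    assert (0 < (y - x) * ((x + y / 2) ^ 2 + 3 / 4 * y ^ 2)); [|lra].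
    apply Rmult_lt_0_compat; [lra|].
    destruct (Req_dec y 0).
    + subst. assert (x <> 0) by lra. assert (0 < x^2) by (match goal with |- 0 < ?z ^ 2 => destruct (Rtotal_order z 0) as [h|[h|h]]; [nra|contradiction|nra] end). nra.
    + assert (0 < y^2) by (match goal with |- 0 < ?z ^ 2 => destruct (Rtotal_order z 0) as [h|[h|h]]; [nra|contradiction|nra] end). nra.
  - assert (y ^ 3 < x ^ 3); [|lra].
    assert (x ^ 3 - y ^ 3 = (x - y) * ((y + x / 2) ^ 2 + 3 / 4 * x ^ 2)) by field.
    assert (0 < (x - y) * ((y + x / 2) ^ 2 + 3 / 4 * x ^ 2)); [|lra].
    apply Rmult_lt_0_compat; [lra|].
    destruct (Req_dec x 0).
    + subst. assert (y <> 0) by lra. assert (0 < y^2) by (match goal with |- 0 < ?z ^ 2 => destruct (Rtotal_order z 0) as [h|[h|h]]; [nra|contradiction|nra] end). nra.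
    + assert (0 < x^2) by (match goal with |- 0 < ?z ^ 2 => destruct (Rtotal_order z 0) as [h|[h|h]]; [nra|contradiction|nra] end). nra.
Qed.

Lemma cont_ext (U : R -> R -> Prop) (f : R -> R -> R) (u v L c r : R) :
  cont2_on U f -> U u v -> 0 < r ->
  (forall e, 0 < e < r -> f (u + e) v = L + c * e) -> f u v = L.
Proof.
  intros Hc HU Hr He.
  destruct (Req_dec (f u v) L) as [|Hne]; auto. exfalso.
  set (D := Rabs (f u v - L)).
  assert (HD : 0 < D) by (apply Rabs_pos_lt; lra).
  destruct (Hc u v HU (D / 2)) as [delta [Hdel Hd]]; [lra|].
  set (m := Rabs c + 1).
  assert (Hm : 0 < m) by (unfold m; pose proof (Rabs_pos c); lra).
  set (e := Rmin (Rmin delta r) (D / (4 * m)) / 2).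
  assert (Hq : 0 < D / (4 * m)) by (apply Rdiv_lt_0_compat; lra).
  assert (H1 : Rmin (Rmin delta r) (D / (4 * m)) <= Rmin delta r) by apply Rmin_l.
  assert (H2 : Rmin (Rmin delta r) (D / (4 * m)) <= D / (4 * m)) by apply Rmin_r.
  assert (H3 : Rmin delta r <= delta) by apply Rmin_l.
  assert (H4 : Rmin delta r <= r) by apply Rmin_r.
  assert (H5 : 0 < Rmin (Rmin delta r) (D / (4 * m))).
  { apply Rmin_pos; [apply Rmin_pos|]; lra. }
  assert (He0 : 0 < e < r) by (unfold e; lra).
  assert (Hed : e < delta) by (unfold e; lra).
  assert (Hem : e * m <= D / 4).
  { assert (e <= D / (4 * m)) by (unfold e; lra).
    apply Rmult_le_compat_r with (r := m) in H; [|lra].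
    replace (D / (4 * m) * m) with (D / 4) in H by (field; lra). lra. }
  assert (Hce : Rabs (c * e) <= D / 4).
  { rewrite Rabs_mult, (Rabs_pos_eq e) by lra.
    unfold m in Hem. nra. }
  specialize (Hd (u + e) v).
  rewrite He in Hd by lra.
  assert (Hd' : Rabs (L + c * e - f u v) < D / 2).
  { apply Hd. rewrite Rabs_pos_eq; lra. rewrite Rminus_diag, Rabs_R0; lra. }
  unfold D in *.
  revert Hd' Hce HD. unfold Rabs. repeat destruct Rcase_abs; intros; lra.
Qed.

Lemma derivs (U : R -> R -> Prop) (X : R -> R -> R) :
  smooth_on U X -> exists fu fv : R -> R -> R,
    forall u v, U u v -> partial_u X u v (fu u v) /\ partial_v X u v (fv u v).
Proof.
  intro H. destruct (H 1%nat) as [fu [fv [H1 _]]]. exists fu, fv. exact H1.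
Qed.

Theorem lemma6p1 (U : R -> R -> Prop) (X Y : R -> R -> R) (mu1 mu2 mu3 : R) :
  open2 U -> connected2 U ->
  local_diffeo_on U X Y ->
  (* U and its image lie where g1, g2, g3 are defined *)
  (forall u v, U u v ->
     v <> 0 /\ 3 * u - v ^ 2 <> 0 /\
     Y u v <> 0 /\ 3 * X u v - (Y u v) ^ 2 <> 0) ->
  mu1 <> 0 -> mu2 <> 0 -> mu3 <> 0 ->
  pullback_eq U X Y g1 mu1 ->
  pullback_eq U X Y g2 mu2 ->
  pullback_eq U X Y g3 mu3 ->
  exists k : R, k <> 0 /\
    forall u v, U u v -> X u v = k ^ 2 * u /\ Y u v = k * v.
Proof.
  intros Hopen _ [HsX [HsY Hdet]] Hdom h1 h2 h3 P1 P2 P3.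
  destruct (derivs U X HsX) as [Xu [Xv HX]].
  destruct (derivs U Y HsY) as [Yu [Yv HY]].
  assert (pt : forall u v, U u v -> v ^ 2 + u <> 0 ->
     mu2 * Y u v ^ 3 = mu1 * v ^ 3 /\ X u v * v ^ 2 = Y u v ^ 2 * u).
  { intros u v HU HP.
    destruct (HX u v HU) as [Ha Hb]. destruct (HY u v HU) as [Hc Hd].
    destruct (Hdom u v HU) as [d1 [d2 [d3 d4]]].
    apply (alg u v (X u v) (Y u v) (Xu u v) (Xv u v) (Yu u v) (Yv u v) mu1 mu2 mu3); auto.
    apply (Hdet u v); auto. }
  assert (shift : forall u v, U u v -> exists r, 0 < r /\
     forall e, 0 < e < r -> U (u + e) v /\ v ^ 2 + (u + e) <> 0 \/ v ^ 2 + u <> 0).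
  { intros u v HU. destruct (Hopen u v HU) as [r [Hr Hr']]. exists r. split; auto.
    intros e He. destruct (Req_dec (v ^ 2 + u) 0) as [H0|H0]; [left|right; auto].
    split; [apply Hr'; [replace (u + e - u) with e by ring; rewrite Rabs_pos_eq; lra
                       | rewrite Rminus_diag, Rabs_R0; lra] | lra]. }
  assert (shift' : forall u v, U u v -> exists r, 0 < r /\
     forall e, 0 < e < r -> U (u + e) v /\ v ^ 2 + (u + e) <> 0).
  { intros u v HU. destruct (Hopen u v HU) as [r [Hr Hr']].
    destruct (Req_dec (v ^ 2 + u) 0) as [H0|H0].
    - exists r. split; auto. intros e He.
      split; [apply Hr'; [replace (u + e - u) with e by ring; rewrite Rabs_pos_eq; lra
                         | rewrite Rminus_diag, Rabs_R0; lra] | lra].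
    - set (r' := Rmin r (Rabs (v ^ 2 + u))).
      assert (0 < Rabs (v ^ 2 + u)) by (apply Rabs_pos_lt; auto).
      assert (r' <= r) by apply Rmin_l. assert (r' <= Rabs (v ^ 2 + u)) by apply Rmin_r.
      assert (0 < r') by (apply Rmin_pos; lra).
      exists r'. split; auto. intros e He.
      split; [apply Hr'; [replace (u + e - u) with e by ring; rewrite Rabs_pos_eq; lra
                         | rewrite Rminus_diag, Rabs_R0; lra] | ].
      revert H0 He H2. unfold Rabs. destruct Rcase_abs; intros; lra. }
  clear shift.
  destruct (classic (exists u v, U u v)) as [[u0 [v0 HU0]] | Hno].
  2:{ exists 1. split; [lra|]. intros u v HU. exfalso. apply Hno. eauto. }
  destruct (shift' u0 v0 HU0) as [r0 [Hr0 Hr0']].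
  destruct (Hr0' (r0 / 2)) as [HU1 HP1]; [lra|].
  set (u1 := u0 + r0 / 2) in *.
  destruct (Hdom u1 v0 HU1) as [v0nz [_ [Y1nz _]]].
  destruct (pt u1 v0 HU1 HP1) as [Hk _].
  set (k := Y u1 v0 / v0).
  assert (hk : k <> 0) by (unfold k; unfold Rdiv; apply Rmult_integral_contrapositive_currified; [auto | apply Rinv_neq_0_compat; auto]).
  assert (Hk3 : mu2 * k ^ 3 = mu1).
  { unfold k. apply (Rmult_eq_reg_r (v0 ^ 3)); [|apply pow_nonzero; auto].
    rewrite <- Hk. field; auto. }
  assert (good : forall u v, U u v -> v ^ 2 + u <> 0 -> X u v = k ^ 2 * u /\ Y u v = k * v).
  { intros u v HU HP. destruct (Hdom u v HU) as [vnz _].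
    destruct (pt u v HU HP) as [E1 E2].
    assert (Hyk : Y u v / v = k).
    { apply cube_inj. apply (Rmult_eq_reg_l mu2); auto.
      rewrite Hk3. transitivity (mu2 * Y u v ^ 3 / v ^ 3); [field; auto | rewrite E1; field; auto]. }
    assert (Hy : Y u v = k * v) by (rewrite <- Hyk; field; auto).
    split; auto.
    apply (Rmult_eq_reg_r (v ^ 2)); [|apply pow_nonzero; auto].
    rewrite E2, Hy. ring. }
  exists k. split; auto. intros u v HU.
  destruct (Req_dec (v ^ 2 + u) 0) as [H0|H0]; [|apply good; auto].
  destruct (shift' u v HU) as [r [Hr Hr']].
  split.
  - apply (cont_ext U X u v (k ^ 2 * u) (k ^ 2) r); auto.
    + exact (HsX 0%nat).
    + intros e He. destruct (Hr' e He) as [HUe HPe].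
      destruct (good _ _ HUe HPe) as [A _]. rewrite A. ring.
  - apply (cont_ext U Y u v (k * v) 0 r); auto.
    + exact (HsY 0%nat).
    + intros e He. destruct (Hr' e He) as [HUe HPe].
      destruct (good _ _ HUe HPe) as [_ A]. rewrite A. ring.
Qed.
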